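(* Let $x$ be a non-negative random variable for which there exist constants $\alpha>0$ and $k>0$ such that $\log(\alpha)/k\ge1$ and $\Pr[x\le\epsilon]\le\alpha\epsilon^k$ for all $\epsilon>0$. Then \[ \mathbb E[\max(1,\log(1/x))]\le\frac{1+\log\alpha}{k}. \]
   Context: $\log$ denotes the natural logarithm. *)

(* Defs.v *)
From HB Require Import structures.
From mathcomp Require Import all_boot all_order all_algebra.
From mathcomp Require Import all_classical all_reals all_analysis.

(* Main.v *)
From HB Require Import structures.
From mathcomp Require Import all_boot all_order all_algebra.
From mathcomp Require Import all_classical all_reals all_analysis.
From mathcomp Require Import measurable_realfun.
From mathcomp Require Import lra ring.
Import Order.TTheory GRing.Theory Num.Theory.
Local Open Scope classical_set_scope.
Local Open Scope ring_scope.

Lemma key d (T : measurableType d) (R : realType) (P : probability T R) (Z : {RV P >-> R}) (b : R) :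
 (forall w, 0 <= Z w) -> 0 < b ->
 (forall r : R, 0 <= r -> (P [set w | (r < Z w)%R] <= (expR (-b*r))%:E)%E) ->
 ('E_P[Z] <= (b^-1)%:E)%E.
Proof.
move=> Z0 b0 H.
rewrite ge0_expectation_ccdf //.
have mD : measurable (`[0%R, +oo[%classic : set R) by exact: measurable_itv.
have mpdf : measurable_fun setT (fun x : R => ((b^-1)%:E * (exponential_pdf b x)%:E)%E).
  apply: emeasurable_funM => //; apply/measurable_EFinP; exact: measurable_exponential_pdf.
have pdf0 : forall x : R, (0 <= (b^-1)%:E * (exponential_pdf b x)%:E)%E.
  move=> x; rewrite -EFinM lee_fin; apply: mulr_ge0; [rewrite invr_ge0; exact: ltW | exact: (exponential_pdf_ge0 (ltW b0) x)].
apply: (@le_trans _ _ (\int[lebesgue_measure]_(x in `[0%R, +oo[) ((b^-1)%:E * (exponential_pdf b x)%:E))%E).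
  apply: ge0_le_integral.
  - exact: mD.
  - by move=> x _; rewrite /ccdf.
  - exact: measurable_funTS (ccdf_measurable Z).
  - exact: measurable_funTS.
  - move=> x xD.
      rewrite /= in_itv /= andbT in xD.
      rewrite exponential_pdfE // -EFinM mulrA mulVf ?gt_eqF// mul1r.
      apply: le_trans (H x xD).
      rewrite /ccdf /distribution /pushforward /=.
      rewrite (_ : Z @^-1` `]x, +oo[ = [set w | (x < Z w)%R]) //.
      by apply/seteqP; split => w /=; rewrite in_itv /= andbT.
apply: (@le_trans _ _ (\int[lebesgue_measure]_x ((b^-1)%:E * (exponential_pdf b x)%:E))%E).
  apply: ge0_subset_integral => //.
rewrite integralZl //.
  by rewrite integral_exponential_pdf // mule1.
exact: integrable_exponential_pdf.
Qed.

Lemma lninv (R : realType) (x : R) : ln (1 / x) = - ln x.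
Proof.
have [x0|x0] := ltP 0 x.
  rewrite -[in LHS](lnK x0) div1r -expRN.
  by rewrite expRK.
rewrite (ln0 x0) oppr0 ln0 //.
by rewrite div1r invr_le0.
Qed.

Theorem mainTheorem9 (d : measure_display) (T : measurableType d) (R : realType)
  (P : probability T R) (X : {RV P >-> R}) (alpha k : R) :
  (forall w, 0 <= X w) ->
  0 < alpha -> 0 < k -> 1 <= ln alpha / k ->
  (forall eps : R, (0 < eps)%R -> (P [set w | (X w <= eps)%R] <= (alpha * eps `^ k)%:E)%E) ->
  (\int[P]_w (Num.max 1 (ln (1 / X w)))%:E <= ((1 + ln alpha) / k)%:E)%E.
Proof.
move=> X0 a0 k0 t01 HP.
set t0 := ln alpha / k.
pose gf (x : R) := Num.max 0 (Num.max 1 (- ln x) - t0).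
have mgf : measurable_fun setT gf.
  apply: measurable_maxr => //.
  apply: measurable_funB => //.
  apply: measurable_maxr => //.
  exact: measurable_funN.
have mZ : measurable_fun setT (gf \o X) by exact: measurableT_comp.
pose Z : {RV P >-> R} := mfun_Sub (mem_set mZ).
have ZE w : Z w = gf (X w) by [].
have Z0 w : 0 <= Z w by rewrite ZE /gf le_max lexx.
have Yle w : Num.max 1 (ln (1 / X w)) <= t0 + Z w.
  rewrite ZE /gf lninv.
  have : Num.max 1 (- ln (X w)) - t0 <= Num.max 0 (Num.max 1 (- ln (X w)) - t0).
    by rewrite le_max lexx orbT.
  lra.
have mY : measurable_fun setT (fun w => Num.max 1 (ln (1 / X w))).
  have -> : (fun w => Num.max 1 (ln (1 / X w))) = (fun w => Num.max 1 (- ln (X w))).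
    by apply/funext => w; rewrite lninv.
  apply: measurable_maxr => //.
  apply: measurable_funN => //.
  exact: measurableT_comp.
apply: (@le_trans _ _ (\int[P]_w ((t0)%:E + (Z w)%:E))%E).
  apply: ge0_le_integral.
  - exact: measurableT.
  - by move=> w _; rewrite lee_fin le_max ler01.
  - exact/measurable_EFinP.
  - apply/measurable_EFinP; apply: measurable_funD => //.
  - by move=> w _; rewrite -EFinD lee_fin.
rewrite ge0_integralD //; first last.
- by apply/measurable_EFinP.
- by move=> w _; rewrite lee_fin.
- by move=> w _; rewrite lee_fin; apply: le_trans t01.
rewrite integral_cst //.
set p := (X in (t0%:E * X)%E).
have -> : p = 1%E by exact: probability_setT.
rewrite mule1 -expectation_def.
have HZ : forall r : R, 0 <= r -> (P [set w | (r < Z w)%R] <= (expR (-k*r))%:E)%E.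
  move=> r r0.
  set eps := expR (- (r + t0)).
  have mX : measurable [set w | X w <= eps].
    rewrite (_ : [set w | X w <= eps] = X @^-1` `]-oo, eps]).
      exact: measurable_funPTI.
    by apply/seteqP; split => w /=; rewrite in_itv.
  have mZr : measurable [set w | r < Z w].
    rewrite (_ : [set w | r < Z w] = Z @^-1` `]r, +oo[).
      exact: measurable_funPTI.
    by apply/seteqP; split => w /=; rewrite in_itv /= andbT.
  apply: (@le_trans _ _ (P [set w | X w <= eps])).
    apply: le_measure; rewrite ?inE //.
    move=> w /= rZ; rewrite /gf in rZ.
    have t1 : 1 <= t0 by [].
    have h1 : r + t0 < Num.max 1 (- ln (X w)).
      move: rZ; rewrite lt_max => /orP[|]; lra.
    have h2 : r + t0 < - ln (X w).
      move: h1; rewrite lt_max => /orP[|//]; lra.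
    have xw0 : 0 < X w.
      rewrite lt_neqAle X0 andbT; apply/negP => /eqP xw.
      move: h2; rewrite -xw ln0 //; lra.
    rewrite /eps -(lnK xw0) ler_expR; lra.
  apply: le_trans (HP eps (expR_gt0 _)) _.
  rewrite lee_fin /eps -expRM.
  have -> : - (r + t0) * k = - k * r + - ln alpha.
    by rewrite /t0; field; rewrite gt_eqF.
  rewrite expRD expRN lnK ?posrE //.
  have -> : alpha * (expR (- k * r) * alpha^-1) = expR (- k * r).
    by field; rewrite gt_eqF.
  by [].
apply: (@le_trans _ _ (t0%:E + (k^-1)%:E)%E).
  by rewrite leeD2l //; apply: key.
rewrite -EFinD lee_fin /t0.
have -> : ln alpha / k + k^-1 = (1 + ln alpha) / k by field; rewrite gt_eqF.
by [].
Qed.
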